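(* Let $K$ be a nilpotent group of class three, let $m\ge 2$ and let $y_1,\ldots,y_m$ be elements of $K$ which generate $K$ modulo $Z(K)$. Assume that $y_i^{2^{r_i}}\in Z(K)$ for each $i$, where $1\leq r_1\leq\cdots\leq r_{m-1}\leq r_m$ are integers. If there exist integers $0\leq\gamma_i<r_{m-1}$, $i=1,\ldots,m-1$, such that $[y_m,y_i]^{2^{\gamma_i}}$ commutes with both $y_i$ and $y_m$, then $y_m^{2^{r_{m-1}}}\in Z(K)$.
   Context: Commutators are $[x,y]=x^{-1}y^{-1}xy$, and are left-normed: $[x,y,z]=[[x,y],z]$. *)

(* Defs.v *)
From Stdlib Require Import Arith.

Record Group := {
  carrier :> Type;
  gmul : carrier -> carrier -> carrier;
  ginv : carrier -> carrier;
  gone : carrier;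
  gmulA : forall x y z, gmul x (gmul y z) = gmul (gmul x y) z;
  gmul1l : forall x, gmul gone x = x;
  gmul1r : forall x, gmul x gone = x;
  gmulVl : forall x, gmul (ginv x) x = gone;
  gmulVr : forall x, gmul x (ginv x) = gone
}.

Arguments gmul {g} x y.
Arguments ginv {g} x.
Arguments gone {g}.

Fixpoint gpow {G : Group} (x : G) (n : nat) : G :=
  match n with
  | O => gone
  | S k => gmul (gpow x k) x
  end.

Definition comm {G : Group} (x y : G) : G :=
  gmul (gmul (gmul (ginv x) (ginv y)) x) y.

Definition center {G : Group} (x : G) : Prop :=
  forall g : G, gmul x g = gmul g x.

Fixpoint upper_central {G : Group} (n : nat) (x : G) : Prop :=
  match n with
  | O => x = gone
  | S k => forall g : G, upper_central k (comm x g)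
  end.

Definition nilpotent_of_class (G : Group) (c : nat) : Prop :=
  (forall x : G, upper_central c x) /\ ~ (forall x : G, upper_central (pred c) x).

Definition is_subgroup {G : Group} (H : G -> Prop) : Prop :=
  H gone /\ (forall x y, H x -> H y -> H (gmul x y)) /\ (forall x, H x -> H (ginv x)).

Definition generated {G : Group} (S : G -> Prop) (x : G) : Prop :=
  forall H : G -> Prop, is_subgroup H -> (forall s, S s -> H s) -> H x.

(* Main.v *)
Require Import Defs.
From Stdlib Require Import Arith Lia.

Definition cm {G : Group} (x y : G) : Prop := gmul x y = gmul y x.

Lemma mulKl {G : Group} (x y : G) : gmul (ginv x) (gmul x y) = y.
Proof. rewrite gmulA, gmulVl, gmul1l; reflexivity. Qed.
Lemma mulVK {G : Group} (w x : G) : gmul (gmul w x) (ginv x) = w.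
Proof. rewrite <- gmulA, gmulVr, gmul1r; reflexivity. Qed.
Lemma mulVK' {G : Group} (w x : G) : gmul (gmul w (ginv x)) x = w.
Proof. rewrite <- gmulA, gmulVl, gmul1r; reflexivity. Qed.
Lemma cancel_l {G : Group} (x y z : G) : gmul x y = gmul x z -> y = z.
Proof. intro H. rewrite <- (mulKl x y), <- (mulKl x z), H. reflexivity. Qed.
Lemma inv_uniq {G : Group} (x y : G) : gmul x y = gone -> y = ginv x.
Proof. intro H. apply (cancel_l x). rewrite H, gmulVr. reflexivity. Qed.
Lemma inv_mul {G : Group} (x y : G) : ginv (gmul x y) = gmul (ginv y) (ginv x).
Proof. symmetry. apply inv_uniq. rewrite !gmulA, mulVK, gmulVr. reflexivity. Qed.
Lemma inv_inv {G : Group} (x : G) : ginv (ginv x) = x.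
Proof. symmetry. apply inv_uniq. apply gmulVl. Qed.
Lemma inv_one {G : Group} : ginv (@gone G) = gone.
Proof. symmetry. apply inv_uniq. apply gmul1l. Qed.

Ltac gsimpl := repeat (rewrite ?inv_mul, ?inv_inv, ?inv_one, ?gmulA, ?mulVK, ?mulVK',
   ?gmulVr, ?gmulVl, ?gmul1l, ?gmul1r).

Lemma right_one {G : Group} (x y : G) : x = gmul x y -> y = gone.
Proof. intro H. apply (cancel_l x). rewrite gmul1r. symmetry; exact H. Qed.

Lemma gpow_S_l {G : Group} (x : G) n : gpow x (S n) = gmul x (gpow x n).
Proof. induction n. simpl. gsimpl; reflexivity.
  change (gmul (gpow x (S n)) x = gmul x (gpow x (S n))). rewrite IHn at 1. rewrite <- gmulA. reflexivity. Qed.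
Lemma gpow_add {G : Group} (x : G) n m : gpow x (n + m) = gmul (gpow x n) (gpow x m).
Proof. induction m; simpl. rewrite Nat.add_0_r, gmul1r; reflexivity.
  rewrite Nat.add_succ_r; simpl. rewrite IHm, gmulA. reflexivity. Qed.
Lemma gpow_mul {G : Group} (x : G) n m : gpow x (n * m) = gpow (gpow x n) m.
Proof. induction m; simpl. rewrite Nat.mul_0_r; reflexivity.
  rewrite Nat.mul_succ_r, gpow_add, IHm. reflexivity. Qed.
Lemma gpow_one {G : Group} n : gpow (@gone G) n = gone.
Proof. induction n; simpl; [reflexivity| rewrite IHn, gmul1l; reflexivity]. Qed.
Lemma cm_pow {G : Group} (x y : G) n : cm x y -> cm (gpow x n) y.
Proof. unfold cm; intro H; induction n; simpl. gsimpl; reflexivity.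
  rewrite <- gmulA, H, gmulA, IHn, <- gmulA. reflexivity. Qed.
Lemma cm_inv {G : Group} (x y : G) : cm x y -> cm (ginv x) y.
Proof. unfold cm; intro H.
  rewrite <- (mulVK (gmul (ginv x) y) x) at 1. rewrite <- (gmulA _ (ginv x) y x), <- H, mulKl. reflexivity. Qed.
Lemma gpow_inv {G : Group} (x : G) n : gpow (ginv x) n = ginv (gpow x n).
Proof. induction n. simpl; gsimpl; reflexivity.
  rewrite gpow_S_l. simpl. rewrite IHn, inv_mul. reflexivity. Qed.
Lemma center_pow {G : Group} (x : G) n : center x -> center (gpow x n).
Proof. intros H g. apply (cm_pow x g n). apply H. Qed.

Lemma comm_one {G : Group} (p g : G) : comm p g = gone -> gmul p g = gmul g p.
Proof. unfold comm; intro H.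
  assert (E : gmul (gmul g p) (gmul (gmul (gmul (ginv p) (ginv g)) p) g) = gmul g p)
    by (rewrite H, gmul1r; reflexivity).
  rewrite <- E. gsimpl. reflexivity. Qed.

Lemma class3 {G : Group} : (forall x : G, upper_central 3 x) ->
  forall x g1 g2 : G, center (comm (comm x g1) g2).
Proof. intros H x g1 g2 g. apply comm_one. exact (H x g1 g2 g). Qed.

Lemma comm_inv {G : Group} (x y : G) : ginv (comm x y) = comm y x.
Proof. unfold comm. gsimpl. reflexivity. Qed.

Lemma shift {G : Group} (u a : G) : gmul u a = gmul a (gmul u (comm u a)).
Proof. unfold comm. gsimpl. reflexivity. Qed.

Lemma shift_pow {G : Group} (u a : G) n : center (comm u a) ->
  gmul (gpow u n) a = gmul a (gmul (gpow u n) (gpow (comm u a) n)).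
Proof. intro He. set (e := comm u a) in *.
  assert (Hua : gmul u a = gmul a (gmul u e)) by apply shift.
  induction n. simpl; gsimpl; reflexivity.
  simpl. rewrite <- gmulA, Hua, gmulA, IHn.
  assert (HE : gmul (gpow e n) u = gmul u (gpow e n)) by (apply center_pow; exact He).
  gsimpl. rewrite <- (gmulA _ (gmul a (gpow u n)) (gpow e n) u), HE. gsimpl. reflexivity.
Qed.

Fixpoint tri (n : nat) : nat := match n with 0 => 0 | S k => tri k + k end.
Lemma tri_eq n : 2 * tri n + n = n * n.
Proof. induction n; simpl; [reflexivity|]. nia. Qed.
Lemma tri_double M : tri (2 * M) = M * (2 * M - 1).
Proof. pose proof (tri_eq (2*M)). destruct M. reflexivity. nia. Qed.

Lemma expand {G : Group} (x y : G) n : center (comm (comm x y) x) ->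
  gmul (ginv y) (gmul (gpow x n) y) =
  gmul (gpow x n) (gmul (gpow (comm x y) n) (gpow (comm (comm x y) x) (tri n))).
Proof. intro He. set (u := comm x y) in *. set (e := comm u x) in *.
  induction n. simpl. gsimpl. reflexivity.
  assert (E1 : gmul (ginv y) (gmul (gpow x (S n)) y)
     = gmul (gmul (ginv y) (gmul (gpow x n) y)) (gmul (ginv y) (gmul x y)))
    by (simpl; gsimpl; reflexivity).
  assert (E2 : gmul (ginv y) (gmul x y) = gmul x u) by (unfold u, comm; gsimpl; reflexivity).
  rewrite E1, E2, IHn.
  assert (HE : forall g, gmul (gpow e (tri n)) g = gmul g (gpow e (tri n)))
    by (apply center_pow; exact He).
  assert (HE1 : forall g, gmul (gpow e n) g = gmul g (gpow e n))
    by (apply center_pow; exact He).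
  pose proof (shift_pow u x n He) as S1. fold e in S1.
  simpl tri. rewrite gpow_add. simpl gpow.
  gsimpl. rewrite <- (gmulA _ (gmul (gpow x n) (gpow u n)) (gpow e (tri n)) x), HE.
  gsimpl.   rewrite <- (gmulA _ (gpow x n) (gpow u n) x), S1. gsimpl.
  rewrite <- (gmulA _ _ (gpow e (tri n)) u), HE. gsimpl.
  rewrite <- (gmulA _ _ (gpow e n) u), HE1. gsimpl.
  rewrite <- (gmulA _ _ (gpow e n) (gpow e (tri n))), HE1. gsimpl. reflexivity.
Qed.

Lemma kill {G : Group} (u a : G) k : center (comm u a) -> cm (gpow u k) a ->
  gpow (comm u a) k = gone.
Proof. intros He H. pose proof (shift_pow u a k He) as S1. unfold cm in H.
  rewrite H in S1. apply cancel_l in S1. apply right_one in S1. exact S1. Qed.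

Lemma key {G : Group} (a b : G) (N M k j : nat) :
  (forall x : G, upper_central 3 x) -> N = 2 * M -> M = k * j ->
  cm (gpow (comm b a) k) a -> cm (gpow (comm b a) k) b -> center (gpow a N) ->
  cm (gpow b N) a.
Proof. intros H3 HN HM Hca Hcb HaN.
  assert (HT : tri N = k * (j * (N - 1))) by (rewrite HN, tri_double, HM; nia).
  set (c := comm b a) in *.
  assert (Hu1 : comm a b = ginv c) by (unfold c; rewrite comm_inv; reflexivity).
  assert (He1 : gpow (comm (comm a b) a) k = gone).
  { apply kill. apply class3; exact H3. rewrite Hu1, gpow_inv. apply cm_inv. exact Hca. }
  pose proof (expand a b N (class3 H3 a b a)) as X1.
  rewrite HT, gpow_mul, He1, gpow_one, gmul1r in X1.
  rewrite (HaN b), mulKl in X1. apply right_one in X1.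
  assert (HcN : gpow c N = gone).
  { replace c with (ginv (comm a b)) by (rewrite Hu1, inv_inv; reflexivity).
    rewrite gpow_inv, X1, inv_one. reflexivity. }
  assert (He2 : gpow (comm c b) k = gone).
  { apply kill. apply class3; exact H3. exact Hcb. }
  pose proof (expand b a N (class3 H3 b a b)) as X2. fold c in X2.
  rewrite HT, gpow_mul, He2, gpow_one, HcN, !gmul1r in X2.
  unfold cm. rewrite <- X2 at 2. gsimpl. reflexivity.
Qed.

Lemma mono (r : nat -> nat) (m : nat) :
  (forall i, 1 <= i < m -> r i <= r (S i)) -> forall i j, 1 <= i -> i <= j -> j <= m -> r i <= r j.
Proof. intros H i j Hi Hij Hj. induction j. lia.
  destruct (Nat.eq_dec i (S j)). subst; lia.
  specialize (H j ltac:(lia)). specialize (IHj ltac:(lia) ltac:(lia)). lia. Qed.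

Theorem lemma2p4 (K : Group) (m : nat) (y : nat -> K) (r : nat -> nat) :
  nilpotent_of_class K 3 ->
  2 <= m ->
  (* y_1, ..., y_m generate K modulo Z(K) *)
  (forall x : K,
     generated (fun z => (exists i, 1 <= i <= m /\ z = y i) \/ center z) x) ->
  (forall i, 1 <= i <= m -> center (gpow (y i) (2 ^ r i))) ->
  1 <= r 1 ->
  (forall i, 1 <= i < m -> r i <= r (S i)) ->
  (exists gamma : nat -> nat,
     forall i, 1 <= i <= m - 1 ->
       gamma i < r (m - 1) /\
       let c := gpow (comm (y m) (y i)) (2 ^ gamma i) in
       gmul c (y i) = gmul (y i) c /\ gmul c (y m) = gmul (y m) c) ->
  center (gpow (y m) (2 ^ r (m - 1))).
Proof.
  intros [H3 _] Hm Hgen Hcen Hr1 Hmono [gamma Hg].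
  pose proof (mono r m Hmono) as Mo.
  set (R := r (m - 1)).
  assert (HR : 1 <= R) by (pose proof (Mo 1 (m-1) ltac:(lia) ltac:(lia) ltac:(lia)); unfold R; lia).
  set (P := gpow (y m) (2 ^ R)).
  intro g. apply (Hgen g (fun x => gmul P x = gmul x P)).
  - split; [gsimpl; reflexivity|]. split.
    + intros x z Hx Hz. rewrite gmulA, Hx, <- gmulA, Hz, gmulA. reflexivity.
    + intros x Hx. symmetry. apply cm_inv. symmetry. exact Hx.
  - intros s [[i [Hi ->]] | Hs].
    + destruct (Nat.eq_dec i m) as [->|Hne].
      * unfold P. apply cm_pow. reflexivity.
      * destruct (Hg i ltac:(lia)) as [Hgi [Hca Hcb]].
        unfold P.
        apply (key (y i) (y m) (2 ^ R) (2 ^ (R - 1)) (2 ^ gamma i) (2 ^ (R - 1 - gamma i)) H3).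
        -- rewrite <- Nat.pow_succ_r'. f_equal. lia.
        -- rewrite <- Nat.pow_add_r. f_equal. unfold R in *. lia.
        -- exact Hca.
        -- exact Hcb.
        -- assert (Hri : r i <= R) by (apply Mo; lia).
           replace (2 ^ R) with (2 ^ r i * 2 ^ (R - r i))
             by (rewrite <- Nat.pow_add_r; f_equal; lia).
           rewrite gpow_mul. apply center_pow. apply Hcen. lia.
    + symmetry. apply Hs.
Qed.
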